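(* Let $Q:[0,k_{\text{crit}}]\to[0,\infty)$ be three times differentiable, strictly increasing with $Q'>0$, concave ($Q''\le 0$), with $Q(0)=0$ and $Q'''\le 0$. Let $k(q)$ denote the inverse function of $Q$ on $[0,Q(k_{\text{crit}})]$ and define $\frac{dN}{dx}(q)=q\,k'(q)-k(q)$. Then $\frac{dN}{dx}$ is monotonically increasing and convex in $q$.
   Context: $Q$ is the free-flow branch of a traffic fundamental diagram (flow as a function of density); the condition $Q'''\le 0$ corresponds to aggressive driving ($v''(k)\le0$ for $v(k)=Q(k)/k$). The quantity $q k'(q)-k(q)$ is the rate of change of the cumulative vehicle count per unit distance along a kinematic wave carrying constant flow $q$. *)

(* Defs.v *)
From Stdlib Require Import Reals.
From Coquelicot Require Import Coquelicot.
Open Scope R_scope.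

Definition Icc (a b : R) (x : R) : Prop := a <= x <= b.

(* Derivative of f at x relative to the set D (one-sided at endpoints of an
   interval): the difference quotient (f y - f x)/(y - x) tends to l as y -> x
   with y in D, y <> x. *)
Definition is_deriv_within (f : R -> R) (D : R -> Prop) (x l : R) : Prop :=
  filterlim (fun y => (f y - f x) / (y - x))
            (within (fun y => D y /\ y <> x) (locally x)) (locally l).

Definition nondecreasing_on (D : R -> Prop) (g : R -> R) : Prop :=
  forall a b, D a -> D b -> a <= b -> g a <= g b.

Definition convex_on (D : R -> Prop) (g : R -> R) : Prop :=
  forall a b t, D a -> D b -> 0 <= t <= 1 ->
    g (t * a + (1 - t) * b) <= t * g a + (1 - t) * g b.

(* Main.v *)
Require Import Defs.
From Stdlib Require Import Reals Lra Psatz.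
From Coquelicot Require Import Coquelicot.
Open Scope R_scope.

Lemma dw_eps f D x l : is_deriv_within f D x l -> forall eps, 0 < eps ->
  exists d, 0 < d /\ forall y, D y -> y <> x -> Rabs (y - x) < d ->
    Rabs ((f y - f x) / (y - x) - l) < eps.
Proof.
  intros H eps He.
  destruct (proj1 (filterlim_locally _ _) H (mkposreal eps He)) as [d Hd].
  exists d; split; [apply cond_pos|].
  intros y Dy Hne Hy. apply (Hd y); [exact Hy| split; auto].
Qed.

Lemma eps_dw f D x l : (forall eps, 0 < eps ->
  exists d, 0 < d /\ forall y, D y -> y <> x -> Rabs (y - x) < d ->
    Rabs ((f y - f x) / (y - x) - l) < eps) -> is_deriv_within f D x l.
Proof.
  intros H. apply filterlim_locally. intros eps.
  destruct (H eps (cond_pos eps)) as [d [Hd Hd']].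
  exists (mkposreal d Hd). intros y Hy [Dy Hne]. apply Hd'; auto.
Qed.

Lemma dw_cont f D x l : is_deriv_within f D x l -> forall eps, 0 < eps ->
  exists d, 0 < d /\ forall y, D y -> Rabs (y - x) < d -> Rabs (f y - f x) < eps.
Proof.
  intros H eps He.
  destruct (dw_eps f D x l H 1 Rlt_0_1) as [d [Hd Hd']].
  assert (Hl : 0 < Rabs l + 1) by (pose proof (Rabs_pos l); lra).
  exists (Rmin d (eps / (Rabs l + 1))). split.
  { apply Rmin_glb_lt; auto. apply Rdiv_lt_0_compat; lra. }
  intros y Dy Hy.
  destruct (Req_dec y x) as [->|Hne].
  { replace (f x - f x) with 0 by ring. rewrite Rabs_R0; auto. }
  assert (Hy1 : Rabs (y - x) < d) by (eapply Rlt_le_trans; [exact Hy| apply Rmin_l]).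
  assert (Hy2 : Rabs (y - x) < eps / (Rabs l + 1)) by (eapply Rlt_le_trans; [exact Hy| apply Rmin_r]).
  specialize (Hd' y Dy Hne Hy1).
  assert (Hq : Rabs ((f y - f x) / (y - x)) < Rabs l + 1).
  { pose proof (Rabs_triang_inv ((f y - f x) / (y - x)) l). lra. }
  replace (f y - f x) with ((f y - f x) / (y - x) * (y - x)) by (field; lra).
  rewrite Rabs_mult.
  assert (0 < Rabs (y - x)) by (apply Rabs_pos_lt; lra).
  apply Rlt_le_trans with ((Rabs l + 1) * Rabs (y - x)).
  { apply Rmult_lt_compat_r; auto. }
  apply Rmult_le_reg_r with (/ (Rabs l + 1)). apply Rinv_0_lt_compat; lra.
  replace ((Rabs l + 1) * Rabs (y - x) * / (Rabs l + 1)) with (Rabs (y - x)) by (field; lra).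
  unfold Rdiv in Hy2. lra.
Qed.

Definition clamp a b y := Rmax a (Rmin b y).

Lemma clamp_in a b y : a <= b -> Icc a b (clamp a b y).
Proof. intros. unfold Icc, clamp, Rmax, Rmin.
  repeat destruct Rle_dec; lra. Qed.

Lemma clamp_id a b y : Icc a b y -> clamp a b y = y.
Proof. unfold Icc, clamp, Rmax, Rmin. intros.
  repeat destruct Rle_dec; lra. Qed.

Lemma clamp_lip a b x y : Icc a b x -> Rabs (clamp a b y - x) <= Rabs (y - x).
Proof. unfold Icc, clamp, Rmax, Rmin. intros.
  repeat destruct Rle_dec; unfold Rabs; repeat destruct Rcase_abs; lra. Qed.

Lemma cont_clamp f a b x : Icc a b x ->
  (forall eps, 0 < eps -> exists d, 0 < d /\ forall y, Icc a b y -> Rabs (y - x) < d -> Rabs (f y - f x) < eps) ->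
  continuity_pt (fun y => f (clamp a b y)) x.
Proof.
  intros Hx H. apply continuity_pt_filterlim, filterlim_locally. intros eps.
  destruct (H eps (cond_pos eps)) as [d [Hd Hd']].
  exists (mkposreal d Hd). intros y Hy.
  unfold ball in *; simpl in *. unfold AbsRing_ball, abs, minus, plus, opp in *; simpl in *.
  rewrite (clamp_id a b x Hx).
  apply Hd'. apply clamp_in. unfold Icc in Hx; lra.
  eapply Rle_lt_trans. apply clamp_lip; auto. exact Hy.
Qed.

Lemma deriv_clamp f a b x l : a < x < b -> is_deriv_within f (Icc a b) x l ->
  is_derive (fun y => f (clamp a b y)) x l.
Proof.
  intros Hx H. apply is_derive_Reals. intros eps He.
  destruct (dw_eps f _ x l H eps He) as [d [Hd Hd']].
  assert (Hp : 0 < Rmin d (Rmin (x - a) (b - x))).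
  { repeat apply Rmin_glb_lt; lra. }
  exists (mkposreal _ Hp). simpl. intros h Hh0 Hh.
  pose proof (Rmin_l d (Rmin (x - a) (b - x))).
  pose proof (Rmin_r d (Rmin (x - a) (b - x))).
  pose proof (Rmin_l (x - a) (b - x)).
  pose proof (Rmin_r (x - a) (b - x)).
  assert (Hin : Icc a b (x + h)).
  { unfold Icc. revert Hh; unfold Rabs; destruct Rcase_abs; intros; lra. }
  rewrite (clamp_id a b (x+h) Hin), (clamp_id a b x) by (unfold Icc; lra).
  replace h with ((x + h) - x) at 2 by ring.
  apply Hd'; auto. lra. replace (x + h - x) with h by ring. lra.
Qed.

Lemma k_cont (kc : R) (Q k : R -> R)
  (Hincr : forall x y, Icc 0 kc x -> Icc 0 kc y -> x < y -> Q x < Q y)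
  (Hk_range : forall q, Icc 0 (Q kc) q -> Icc 0 kc (k q))
  (HQk : forall q, Icc 0 (Q kc) q -> Q (k q) = q) :
  forall q, Icc 0 (Q kc) q -> forall eps, 0 < eps -> exists d, 0 < d /\
    forall y, Icc 0 (Q kc) y -> Rabs (y - q) < d -> Rabs (k y - k q) < eps.
Proof.
  intros q Hq eps He.
  pose proof (Hk_range q Hq) as Hx. set (x := k q) in *.
  set (d1 := if Rle_dec (x + eps) kc then Q (x + eps) - Q x else 1).
  set (d2 := if Rle_dec 0 (x - eps) then Q x - Q (x - eps) else 1).
  assert (H1 : 0 < d1).
  { unfold d1; destruct (Rle_dec (x + eps) kc); [|lra]. unfold Icc in *.
    assert (Q x < Q (x + eps)) by (apply Hincr; unfold Icc; lra). lra. }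
  assert (H2 : 0 < d2).
  { unfold d2; destruct (Rle_dec 0 (x - eps)); [|lra]. unfold Icc in *.
    assert (Q (x - eps) < Q x) by (apply Hincr; unfold Icc; lra). lra. }
  exists (Rmin d1 d2). split. apply Rmin_glb_lt; auto.
  intros y Hy Hyd.
  pose proof (Rmin_l d1 d2). pose proof (Rmin_r d1 d2).
  pose proof (Hk_range y Hy) as Hz. pose proof (HQk y Hy) as Ey. pose proof (HQk q Hq) as Eq.
  fold x in Eq.
  set (z := k y) in *.
  assert (Hyq : Rabs (y - q) < d1 /\ Rabs (y - q) < d2) by lra.
  clear Hyd.
  destruct (Rlt_or_le (Rabs (z - x)) eps) as [ok|bad]; auto. exfalso.
  revert bad; unfold Rabs at 1; destruct Rcase_abs; intro bad.
  -
    unfold Icc in *.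
    assert (C : 0 <= x - eps) by lra.
    assert (Q z <= Q (x - eps)).
    { destruct (Req_dec z (x - eps)) as [->|ne]; [lra|].
      left; apply Hincr; unfold Icc; lra. }
    unfold d2 in Hyq; destruct (Rle_dec 0 (x - eps)); [|lra].
    revert Hyq; unfold Rabs; destruct Rcase_abs; intros; lra.
  - unfold Icc in *.
    assert (C : x + eps <= kc) by lra.
    assert (Q (x + eps) <= Q z).
    { destruct (Req_dec z (x + eps)) as [->|ne]; [lra|].
      left; apply Hincr; unfold Icc; lra. }
    unfold d1 in Hyq; destruct (Rle_dec (x + eps) kc); [|lra].
    revert Hyq; unfold Rabs; destruct Rcase_abs; intros; lra.
Qed.

Lemma k_deriv (kc : R) (Q Q1 k : R -> R)
  (HQ1 : forall x, Icc 0 kc x -> is_deriv_within Q (Icc 0 kc) x (Q1 x))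
  (Hincr : forall x y, Icc 0 kc x -> Icc 0 kc y -> x < y -> Q x < Q y)
  (Hpos : forall x, Icc 0 kc x -> 0 < Q1 x)
  (Hk_range : forall q, Icc 0 (Q kc) q -> Icc 0 kc (k q))
  (HQk : forall q, Icc 0 (Q kc) q -> Q (k q) = q) :
  forall q, Icc 0 (Q kc) q -> is_deriv_within k (Icc 0 (Q kc)) q (/ Q1 (k q)).
Proof.
  intros q Hq. apply eps_dw. intros eps He.
  pose proof (Hk_range q Hq) as Hx. set (x := k q) in *.
  pose proof (Hpos x Hx) as HL. set (L := Q1 x) in *.
  set (eta := Rmin (L / 2) (eps * L * L / 2)).
  assert (HeL : 0 < eps * L * L) by (apply Rmult_lt_0_compat; [apply Rmult_lt_0_compat|]; lra).
  assert (Heta : 0 < eta) by (unfold eta; apply Rmin_glb_lt; lra).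
  assert (E1 : eta <= L / 2) by apply Rmin_l.
  assert (E2 : eta <= eps * L * L / 2) by apply Rmin_r.
  destruct (dw_eps Q _ x L (HQ1 x Hx) eta Heta) as [dq [Hdq Hdq']].
  destruct (k_cont kc Q k Hincr Hk_range HQk q Hq dq Hdq) as [d [Hd Hd']].
  exists d; split; auto. intros y Hy Hne Hyd.
  pose proof (Hk_range y Hy) as Hz. pose proof (HQk y Hy) as Ey. pose proof (HQk q Hq) as Eq.
  fold x in Eq. set (z := k y) in *.
  assert (Hzx : z <> x) by (intro E; apply Hne; rewrite <- Ey, <- Eq, E; reflexivity).
  specialize (Hdq' z Hz Hzx (Hd' y Hy Hyd)).
  rewrite Ey, Eq in Hdq'.
  set (r := (y - q) / (z - x)) in *.
  assert (Hr : L / 2 < r).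
  { revert Hdq'; unfold Rabs; destruct Rcase_abs; intros; lra. }
  assert (Hyq : y - q <> 0) by lra.
  assert (Hzx' : z - x <> 0) by lra.
  replace ((z - x) / (y - q) - / L) with ((L - r) / (r * L)) by (unfold r; field; repeat split; auto; lra).
  rewrite Rabs_div by nra. rewrite (Rabs_right (r * L)) by nra.
  apply Rmult_lt_reg_r with (r * L). nra.
  unfold Rdiv; rewrite Rmult_assoc, Rinv_l, Rmult_1_r by nra.
  rewrite Rabs_minus_sym. nra.
Qed.

Theorem lemma5
  (kcrit : R) (Q Q1 Q2 Q3 k : R -> R)
  (Hkc : 0 < kcrit)
  (HQ1 : forall x, Icc 0 kcrit x -> is_deriv_within Q (Icc 0 kcrit) x (Q1 x))
  (HQ2 : forall x, Icc 0 kcrit x -> is_deriv_within Q1 (Icc 0 kcrit) x (Q2 x))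
  (HQ3 : forall x, Icc 0 kcrit x -> is_deriv_within Q2 (Icc 0 kcrit) x (Q3 x))
  (Hnonneg : forall x, Icc 0 kcrit x -> 0 <= Q x)
  (Hincr : forall x y, Icc 0 kcrit x -> Icc 0 kcrit y -> x < y -> Q x < Q y)
  (Hpos : forall x, Icc 0 kcrit x -> 0 < Q1 x)
  (Hconc : forall x, Icc 0 kcrit x -> Q2 x <= 0)
  (HQ0 : Q 0 = 0)
  (H3 : forall x, Icc 0 kcrit x -> Q3 x <= 0)
  (Hk_range : forall q, Icc 0 (Q kcrit) q -> Icc 0 kcrit (k q))
  (HQk : forall q, Icc 0 (Q kcrit) q -> Q (k q) = q)
  (HkQ : forall x, Icc 0 kcrit x -> k (Q x) = x) :
  exists dk : R -> R,
    (forall q, Icc 0 (Q kcrit) q -> is_deriv_within k (Icc 0 (Q kcrit)) q (dk q)) /\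
    nondecreasing_on (Icc 0 (Q kcrit)) (fun q => q * dk q - k q) /\
    convex_on (Icc 0 (Q kcrit)) (fun q => q * dk q - k q).
Proof.
  exists (fun q => / Q1 (k q)).
  split. { apply k_deriv; auto. }
  set (Qt := fun y => Q (clamp 0 kcrit y)).
  set (Q1t := fun y => Q1 (clamp 0 kcrit y)).
  set (Q2t := fun y => Q2 (clamp 0 kcrit y)).
  assert (Dint : forall x, 0 < x < kcrit -> Icc 0 kcrit x) by (unfold Icc; intros; lra).
  assert (dQt : forall x, 0 < x < kcrit -> is_derive Qt x (Q1 x))
    by (intros; apply deriv_clamp; auto).
  assert (dQ1t : forall x, 0 < x < kcrit -> is_derive Q1t x (Q2 x))
    by (intros; apply deriv_clamp; auto).
  assert (dQ2t : forall x, 0 < x < kcrit -> is_derive Q2t x (Q3 x))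
    by (intros; apply deriv_clamp; auto).
  assert (cQt : forall x, Icc 0 kcrit x -> continuity_pt Qt x)
    by (intros; apply cont_clamp; auto; eapply dw_cont; eauto).
  assert (cQ1t : forall x, Icc 0 kcrit x -> continuity_pt Q1t x)
    by (intros; apply cont_clamp; auto; eapply dw_cont; eauto).
  assert (cQ2t : forall x, Icc 0 kcrit x -> continuity_pt Q2t x)
    by (intros; apply cont_clamp; auto; eapply dw_cont; eauto).
  assert (eQt : forall x, Icc 0 kcrit x -> Qt x = Q x)
    by (intros; unfold Qt; rewrite clamp_id; auto).
  assert (eQ1t : forall x, Icc 0 kcrit x -> Q1t x = Q1 x)
    by (intros; unfold Q1t; rewrite clamp_id; auto).
  assert (eQ2t : forall x, Icc 0 kcrit x -> Q2t x = Q2 x)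
    by (intros; unfold Q2t; rewrite clamp_id; auto).
  set (h := fun x => - Q x * Q2 x / Q1 x ^ 3).
  set (g := fun x => Q x / Q1 x - x).
  assert (hmono : forall x y, Icc 0 kcrit x -> Icc 0 kcrit y -> x <= y -> h x <= h y).
  { intros x y Hx Hy Hxy.
    destruct (Req_dec x y) as [<-|Hne]; [lra|].
    set (dF := fun t => (- Q1 t * Q2 t - Q t * Q3 t) / Q1 t ^ 3 + 3 * Q t * Q2 t ^ 2 / Q1 t ^ 4).
    destruct (MVT_gen (fun t => - Qt t * Q2t t / Q1t t ^ 3) x y dF) as [c [Hc Hmvt]].
    - intros t Ht. rewrite Rmin_left, Rmax_right in Ht by lra.
      assert (Ht' : 0 < t < kcrit) by (unfold Icc in *; lra).
      assert (Q1 t > 0) by (apply Hpos; auto).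
      auto_derive.
      + repeat split; try (eexists; eauto).
        rewrite eQ1t by auto. apply Rgt_not_eq. repeat apply Rmult_lt_0_compat; lra.
      + replace (Derive (fun x0 => Qt x0) t) with (Q1 t) by (symmetry; apply is_derive_unique; apply (dQt t Ht')).
        replace (Derive (fun x0 => Q1t x0) t) with (Q2 t) by (symmetry; apply is_derive_unique; apply (dQ1t t Ht')).
        replace (Derive (fun x0 => Q2t x0) t) with (Q3 t) by (symmetry; apply is_derive_unique; apply (dQ2t t Ht')).
        unfold dF. rewrite eQt, eQ1t, eQ2t by auto. field. lra.
    - intros t Ht. rewrite Rmin_left, Rmax_right in Ht by lra.
      assert (Ht' : Icc 0 kcrit t) by (unfold Icc in *; lra).
      assert (Q1 t > 0) by (apply Hpos; auto).
      apply continuity_pt_div.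
      + apply continuity_pt_mult. apply continuity_pt_opp. auto. auto.
      + apply continuity_pt_mult. auto. apply continuity_pt_mult. auto.
        apply continuity_pt_mult. auto. apply continuity_pt_const. intros u v; auto.
      + rewrite eQ1t by auto. apply Rgt_not_eq. repeat apply Rmult_lt_0_compat; lra.
    - rewrite Rmin_left, Rmax_right in Hc by lra.
      assert (Hc' : Icc 0 kcrit c) by (unfold Icc in *; lra).
      rewrite eQt, eQ1t, eQ2t, eQt, eQ1t, eQ2t in Hmvt by auto.
      assert (0 <= dF c).
      { unfold dF. pose proof (Hpos c Hc'). pose proof (Hnonneg c Hc').
        pose proof (Hconc c Hc'). pose proof (H3 c Hc').
        apply Rplus_le_le_0_compat; unfold Rdiv; apply Rmult_le_pos;
          try (left; apply Rinv_0_lt_compat; apply pow_lt; lra); nra. }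
      unfold h. nra. }
  assert (cauchy : forall x y, Icc 0 kcrit x -> Icc 0 kcrit y -> x < y ->
     exists c, x <= c <= y /\ g y - g x = h c * (Q y - Q x)).
  { intros x y Hx Hy Hxy.
    set (A := Q y - Q x). set (B := g y - g x).
    set (dF := fun t => (- Q t * Q2 t / Q1 t ^ 2) * A - Q1 t * B).
    destruct (MVT_gen (fun t => (Qt t / Q1t t - t) * A - Qt t * B) x y dF) as [c [Hc Hmvt]].
    - intros t Ht. rewrite Rmin_left, Rmax_right in Ht by lra.
      assert (Ht' : 0 < t < kcrit) by (unfold Icc in *; lra).
      assert (Q1 t > 0) by (apply Hpos; auto).
      auto_derive.
      + repeat split; try (eexists; eauto).
        rewrite eQ1t by auto. lra.
      + replace (Derive (fun x0 => Qt x0) t) with (Q1 t) by (symmetry; apply is_derive_unique; apply (dQt t Ht')).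
        replace (Derive (fun x0 => Q1t x0) t) with (Q2 t) by (symmetry; apply is_derive_unique; apply (dQ1t t Ht')).
        unfold dF. rewrite eQt, eQ1t by auto. field. lra.
    - intros t Ht. rewrite Rmin_left, Rmax_right in Ht by lra.
      assert (Ht' : Icc 0 kcrit t) by (unfold Icc in *; lra).
      assert (Q1 t > 0) by (apply Hpos; auto).
      apply continuity_pt_minus.
      + apply continuity_pt_mult. apply continuity_pt_minus.
        apply continuity_pt_div; auto. rewrite eQ1t by auto. lra.
        apply continuity_pt_id. apply continuity_pt_const. intros u v; auto.
      + apply continuity_pt_mult. auto. apply continuity_pt_const. intros u v; auto.
    - rewrite Rmin_left, Rmax_right in Hc by lra.
      assert (Hc' : Icc 0 kcrit c) by (unfold Icc in *; lra).
      exists c. split; auto.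
      rewrite eQt, eQ1t, eQt, eQ1t in Hmvt by auto.
      assert (E0 : dF c = 0).
      { assert (Z : dF c * (y - x) = 0).
        { rewrite <- Hmvt. unfold A, B, g. ring. }
        apply Rmult_integral in Z. destruct Z; auto. lra. }
      fold B. pose proof (Hpos c Hc').
      unfold dF in E0. unfold h.
      apply Rmult_eq_reg_l with (Q1 c); [|lra].
      replace (Q1 c * B) with (- Q c * Q2 c / Q1 c ^ 2 * A) by lra.
      fold A. field. lra. }

  assert (HQkc : 0 < Q kcrit).
  { rewrite <- HQ0. apply Hincr; unfold Icc; lra. }
  assert (fg : forall q, Icc 0 (Q kcrit) q -> q * / Q1 (k q) - k q = g (k q)).
  { intros q Hq. unfold g. rewrite (HQk q Hq). reflexivity. }
  assert (kmono : forall a b, Icc 0 (Q kcrit) a -> Icc 0 (Q kcrit) b -> a < b -> k a < k b).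
  { intros a b Ha Hb Hab. destruct (Rlt_or_le (k a) (k b)) as [|Hle]; auto.
    exfalso. destruct (Req_dec (k a) (k b)) as [E|Ne].
    - rewrite <- (HQk a Ha), <- (HQk b Hb), E in Hab. lra.
    - assert (Q (k b) < Q (k a)) by (apply Hincr; auto; lra).
      rewrite (HQk a Ha), (HQk b Hb) in *. lra. }
  assert (slope : forall a b, Icc 0 (Q kcrit) a -> Icc 0 (Q kcrit) b -> a < b ->
    exists c, k a <= c <= k b /\
      (b * / Q1 (k b) - k b) - (a * / Q1 (k a) - k a) = h c * (b - a)).
  { intros a b Ha Hb Hab.
    destruct (cauchy (k a) (k b)) as [c [Hc Hcc]]; auto.
    exists c; split; auto. rewrite fg, fg by auto. rewrite Hcc, HQk, HQk by auto. reflexivity. }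
  assert (hpos : forall c, Icc 0 kcrit c -> 0 <= h c).
  { intros c Hc. unfold h. pose proof (Hpos c Hc). pose proof (Hnonneg c Hc).
    pose proof (Hconc c Hc). unfold Rdiv. apply Rmult_le_pos.
    nra. left; apply Rinv_0_lt_compat; apply pow_lt; lra. }
  assert (EIcc : forall a b t, Icc 0 (Q kcrit) a -> Icc 0 (Q kcrit) b -> 0 <= t <= 1 ->
     Icc 0 (Q kcrit) (t * a + (1 - t) * b)).
  { unfold Icc; intros; split; nra. }
  assert (core : forall a b t, Icc 0 (Q kcrit) a -> Icc 0 (Q kcrit) b -> a < b -> 0 < t < 1 ->
     let f := fun q => q * / Q1 (k q) - k q in
     f (t * a + (1 - t) * b) <= t * f a + (1 - t) * f b).
  { intros a b t Ha Hb Hab Ht f.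
    set (m := t * a + (1 - t) * b).
    assert (Hm : Icc 0 (Q kcrit) m) by (apply EIcc; auto; lra).
    assert (am : a < m) by (unfold m; nra).
    assert (mb : m < b) by (unfold m; nra).
    destruct (slope a m Ha Hm am) as [c1 [Hc1 S1]].
    destruct (slope m b Hm Hb mb) as [c2 [Hc2 S2]].
    pose proof (Hk_range a Ha). pose proof (Hk_range b Hb).
    assert (Icc 0 kcrit c1) by (unfold Icc in *; lra).
    assert (Icc 0 kcrit c2) by (unfold Icc in *; lra).
    assert (Hh : h c1 <= h c2) by (apply hmono; auto; lra).
    assert (0 <= t * (1 - t) * (b - a) * (h c2 - h c1)).
    { repeat apply Rmult_le_pos; lra. }
    assert (m - a = (1 - t) * (b - a)) by (unfold m; ring).
    assert (b - m = t * (b - a)) by (unfold m; ring).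
    unfold f. nra. }
  split.
  - intros a b Ha Hb Hab. destruct (Req_dec a b) as [<-|Hne]; [lra|].
    destruct (slope a b Ha Hb) as [c [Hc S]]; [lra|].
    pose proof (Hk_range a Ha). pose proof (Hk_range b Hb).
    assert (Icc 0 kcrit c) by (unfold Icc in *; lra).
    pose proof (hpos c H1). nra.
  - intros a b t Ha Hb Ht.
    destruct (Req_dec t 0) as [->|Ht0].
    { replace (0 * a + (1 - 0) * b) with b by ring. lra. }
    destruct (Req_dec t 1) as [->|Ht1].
    { replace (1 * a + (1 - 1) * b) with a by ring. lra. }
    destruct (Rtotal_order a b) as [Hab|[<-|Hab]].
    + apply (core a b t); auto; lra.
    + replace (t * a + (1 - t) * a) with a by ring. lra.
    + pose proof (core b a (1 - t) Hb Ha Hab ltac:(lra)) as C. simpl in C.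
      replace (t * a + (1 - t) * b) with ((1 - t) * b + (1 - (1 - t)) * a) by ring.
      lra.
Qed.
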